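(* Let $(S,\mathrm{d})$ be a complete separable metric space with a Borel probability measure $\mu$, let $\Sigma=S^{\mathbb{Z}_-}$ with the product topology, and let $\phi\in C_b(\Sigma)$. Then the map $L_\phi^*:\mathcal{M}(\Sigma)\to\mathcal{M}(\Sigma)$ is continuous with respect to the weak topology, i.e. whenever $\nu_n\to\nu$ weakly in $\mathcal M(\Sigma)$ (that is, $\int f\,d\nu_n\to\int f\,d\nu$ for all $f\in C_b(\Sigma)$), then $L_\phi^*\nu_n\to L_\phi^*\nu$ weakly.
   Context: $\mathbb{Z}_-=\{-1,-2,\dots\}$; elements of $\Sigma$ are written $\bar x=(\dots x_{-2}x_{-1})$, and for $z\in S$, $\bar x z:=(\dots x_{-2}x_{-1}z)\in\Sigma$ denotes the sequence obtained by appending $z$ as the new coordinate $-1$ (the old coordinate $-i$ becoming coordinate $-i-1$). $\mathcal M(\Sigma)$ is the space of finite signed Borel measures on $\Sigma$ and $C_b(\Sigma)$ the bounded continuous real functions. The adjoint Ruelle operator is $(L_\phi^*\nu)(A):=\int_\Sigma\nu(d\bar x)\int_S\mathbf 1_{\{\bar xz\in A\}}e^{\phi(\bar xz)}\mu(dz)$ for Borel $A\subset\Sigma$. *)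

(* Defs.v *)
From HB Require Import structures.
From mathcomp Require Import all_boot all_order all_algebra.
From mathcomp Require Import all_classical all_reals all_analysis.
Set Implicit Arguments. Unset Strict Implicit. Unset Printing Implicit Defensive.
Import Order.TTheory GRing.Theory Num.Theory numFieldNormedType.Exports.
Local Open Scope classical_set_scope.
Local Open Scope ring_scope.
Local Open Scope ereal_scope.

Definition borel (T : ptopologicalType) := g_sigma_algebraType (@open T).

(* Sigma = S^{Z_-} with the product topology.  A point x : nat -> S encodes
   the sequence (... x_{-2} x_{-1}) via x_{-(k+1)} = x k. *)
Definition Sigma (S : ptopologicalType) : Type := {ptws nat -> S}.
HB.instance Definition _ (S : ptopologicalType) := Topological.on (Sigma S).
HB.instance Definition _ (S : ptopologicalType) := Pointed.on (Sigma S).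

(* x z : append z as the new coordinate -1; old coordinate -i becomes -i-1. *)
Definition sappend (S : ptopologicalType) (x : Sigma S) (z : S) : Sigma S :=
  fun k => if k is k'.+1 then x k' else z.

Definition separable (T : topologicalType) :=
  exists D : set T, countable D /\ closure D = setT.

Definition bounded_fun (T : Type) (R : realType) (f : T -> R) :=
  exists M : R, forall x, (`|f x| <= M)%R.

Definition Cb (T : topologicalType) (R : realType) (f : T -> R) :=
  continuous (f : T -> R^o) /\ bounded_fun f.

(* Finite signed Borel measures are mathcomp charges.  Integration against a
   charge is defined through its Jordan decomposition (for a Hahn
   decomposition chosen by the axiom of choice; the result does not depend on
   the choice). *)
Section charge_integral.
Context d (T : measurableType d) (R : realType).

Definition hahnP (nu : {charge set T -> \bar R}) :
  {P : set T | exists N, hahn_decomposition nu P N} :=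
  cid (Hahn_decomposition nu).

Definition hahnN (nu : {charge set T -> \bar R}) :
  {N : set T | hahn_decomposition nu (sval (hahnP nu)) N} :=
  cid (svalP (hahnP nu)).

Definition cpos (nu : {charge set T -> \bar R}) := jordan_pos (svalP (hahnN nu)).
Definition cneg (nu : {charge set T -> \bar R}) := jordan_neg (svalP (hahnN nu)).

Definition cint (nu : {charge set T -> \bar R}) (f : T -> \bar R) : \bar R :=
  \int[cpos nu]_x f x - \int[cneg nu]_x f x.

End charge_integral.

Definition weak_cvg (T : ptopologicalType) (R : realType)
  (nu_ : nat -> {charge set borel T -> \bar R}) (nu : {charge set borel T -> \bar R}) :=
  forall f : T -> R, Cb f ->
    cint (nu_ n) (fun x => (f x)%:E) @[n --> \oo] --> cint nu (fun x => (f x)%:E).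

Definition Lstar (R : realType) (S : ptopologicalType)
  (mu : probability (borel S) R) (phi : Sigma S -> R)
  (nu : {charge set borel (Sigma S) -> \bar R}) (A : set (Sigma S)) : \bar R :=
  cint nu (fun x : borel (Sigma S) =>
    \int[mu]_z ((\1_A (sappend x z)) * expR (phi (sappend x z)))%:E).

(* Main.v *)
Require Import Defs.
From HB Require Import structures.
From mathcomp Require Import all_boot all_order all_algebra.
From mathcomp Require Import all_classical all_reals all_analysis.
From mathcomp Require Import measurable_realfun.
From mathcomp Require Import lra.
Import Order.TTheory GRing.Theory Num.Theory numFieldNormedType.Exports.
Local Open Scope classical_set_scope.
Local Open Scope ring_scope.
Section Topo.
Variables (R : realType) (S : completePseudoMetricType R).

Lemma sappend_contx (x : Sigma S) : continuous (sappend x : S -> Sigma S).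
Proof.
move=> z; apply/pointwise_cvgP => -[|k] /=.
  by move=> A.
by move=> A /nbhs_singleton Axk; apply: nearW => y.
Qed.

Lemma sappend_contz (z : S) : continuous (fun x : Sigma S => sappend x z).
Proof.
move=> x; apply/pointwise_cvgP => -[|k] /=.
  move=> A /nbhs_singleton Axk.
  change (nbhs x [set y : Sigma S | A z]).
  rewrite (_ : [set y : Sigma S | A z] = setT); first exact: filterT.
  by apply/seteqP; split.
exact: (@proj_continuous nat (fun _ => S) k x).
Qed.

Definition SM := {ptws nat -> S}.

Lemma not_nbhs_seq (x0 : Sigma S) (P : set (Sigma S)) : ~ nbhs x0 P ->
  exists u : nat -> Sigma S, (u n @[n --> \oo] --> x0) /\ forall n, ~ P (u n).
Proof.
move=> nP.
have H n : exists y : Sigma S, ball (x0 : SM) (n.+1%:R^-1) (y : SM) /\ ~ P y.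
  apply: contrapT => /forallNP H; apply: nP.
  change (nbhs (x0 : SM) P); apply/nbhs_ballP; exists (n.+1%:R^-1) => //=.
  move=> y By; apply: contrapT => Py; apply: (H y); split => //.
pose u n := sval (cid (H n)).
exists u; split; last by move=> n; rewrite /u; case: cid => y [].
change (u n @[n --> \oo] --> (x0 : SM)).
apply/cvg_ballP => e e0; near=> n.
rewrite /u; case: cid => y [By _] /=.
apply: le_ball By.
near: n; exists (Num.truncn e^-1) => // n /= Hn.
rewrite -[leRHS]invrK lef_pV2 ?posrE ?invr_gt0 ?ltr0n //.
rewrite truncn_le_nat in Hn; apply: ltW; apply: (lt_le_trans Hn).
by rewrite ler_nat.
Unshelve. all: by end_near.
Qed.
End Topo.
Section Meas.
Variables (R : realType).

Lemma cont_meas_borel (T T' : ptopologicalType) (f : T -> T') :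
  continuous f -> measurable_fun setT (f : borel T -> borel T').
Proof.
move=> cf; apply: (@measurability _ _ (borel T) (borel T') setT f (@open T')) => //.
move=> _ [B oB <-]; apply: sub_sigma_algebra; rewrite setTI.
by apply: open_comp => // x _; exact: cf.
Qed.

Lemma cont_meas_R (T : ptopologicalType) (f : T -> R) :
  continuous f -> measurable_fun setT (f : borel T -> R).
Proof.
move=> cf; apply: (measurability _ (RGenOInfty.measurableE R)) => //.
move=> _ [_ [r ->] <-]; apply: sub_sigma_algebra; rewrite setTI.
apply: open_comp => [x _|]; first exact: cf.
rewrite (_ : `]r, +oo[%classic = [set x | x > r]); first exact: open_gt.
by apply/seteqP; split => x /=; rewrite in_itv /= andbT.
Qed.

Lemma open_meas (T : ptopologicalType) (U : set T) : open U -> measurable (U : set (borel T)).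
Proof. by move=> oU; apply: sub_sigma_algebra. Qed.

End Meas.
Section Gen.
Local Open Scope ereal_scope.
Context d (T : measurableType d) (R : realType).
Variable m : {finite_measure set T -> \bar R}.

Lemma int_bdd (g : T -> R) (B : R) : measurable_fun setT g ->
  (forall x, (`|g x| <= B)%R) -> m.-integrable setT (EFin \o g).
Proof.
move=> mg gB.
apply: (@le_integrable _ _ _ m setT measurableT (EFin \o g) (EFin \o cst B)).
- exact/measurable_EFinP.
- move=> x _ /=; rewrite lee_fin (le_trans (gB x))//.
  exact: ler_norm.
- exact: finite_measure_integrable_cst.
Qed.

Lemma int_bdd_fin (g : T -> R) (B : R) : measurable_fun setT g ->
  (forall x, (`|g x| <= B)%R) -> \int[m]_x (g x)%:E \is a fin_num.
Proof. move=> mg gB; have := integrable_fin_num measurableT (@int_bdd _ _ mg gB). done. Qed.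

Lemma int_bddB (g1 g2 : T -> R) (B1 B2 : R) : measurable_fun setT g1 ->
  (forall x, (`|g1 x| <= B1)%R) -> measurable_fun setT g2 ->
  (forall x, (`|g2 x| <= B2)%R) ->
  \int[m]_x (g1 x - g2 x)%:E = \int[m]_x (g1 x)%:E - \int[m]_x (g2 x)%:E.
Proof.
move=> m1 b1 m2 b2.
by rewrite -(integralB measurableT (@int_bdd _ _ m1 b1) (@int_bdd _ _ m2 b2)).
Qed.

Lemma dcvg_cst (f_ : nat -> T -> \bar R) (f : T -> \bar R) (c : R) :
  (forall n, measurable_fun setT (f_ n)) ->
  (forall x, f_ ^~ x @ \oo --> f x) ->
  (forall n x, `|f_ n x| <= c%:E) ->
  \int[m]_x f_ n x @[n --> \oo] --> \int[m]_x f x.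
Proof.
move=> mf cf bf.
apply: (@dominated_cvg _ _ _ m setT measurableT f_ f (EFin \o cst c)) => //.
exact: finite_measure_integrable_cst.
Qed.

End Gen.
Local Open Scope ring_scope.
Section Count.
Variable R : realType.
Lemma count_inv (v : R) (N : nat) : 0 <= v ->
  let s := \sum_(k < N) ((k.+1%:R < v)%R%:R : R) in
  [/\ s <= v, s <= N%:R & (v - 1 <= s \/ s = N%:R)].
Proof.
move=> v0; elim: N => [|N [IH1 IH2 IH3]] /=.
  by rewrite big_ord0; split => //; right.
rewrite big_ord_recr /=.
set s := \sum_(i < N) _ in IH1 IH2 IH3 *.
have [h|h] := ltP (N.+1%:R : R) v.
- rewrite mulr1n; rewrite -natr1 in h *; split; try lra.
  all: try by case: IH3 => H; [left|right]; lra.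
- rewrite /= mulr0n addr0; rewrite -natr1 in h *; split; try lra.
  all: try by left; case: IH3 => H; lra.
Qed.

Lemma count_bd (v : R) (N : nat) : 0 <= v ->
  let s := \sum_(k < N) ((k.+1%:R < v)%R%:R : R) in
  s <= v /\ (v <= N%:R -> v - 1 <= s).
Proof.
move=> v0 /=; have [H1 H2 H3] := @count_inv v N v0; split => // vN.
case: H3 => [//|->]; by rewrite lerBlDr (le_trans vN)// lerDl.
Qed.
End Count.

Lemma indic_boolE (T : Type) (R : realType) (b : T -> bool) y :
  \1_[set y | b y] y = (b y)%:R :> R.
Proof.
rewrite indicE; case: (boolP (b y)) => H; first by rewrite mem_set.
by rewrite memNset //; apply/negP.
Qed.
Section Main.
Variables (R : realType) (S : completePseudoMetricType R).
Variable mu : probability (borel S) R.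
Variable phi : Sigma S -> R.
Hypothesis phi_Cb : Cb phi.
Local Notation X := (borel (Sigma S)).

Let M : R := sval (cid (proj2 phi_Cb)).
Let MP y : `|phi y| <= M := svalP (cid (proj2 phi_Cb)) y.
Let C : R := expR M.
Let E_le y : expR (phi y) <= C.
Proof. by rewrite ler_expR (le_trans (ler_norm _) (MP y)). Qed.
Let E_gt0 y : 0 < expR (phi y).
Proof. exact: expR_gt0. Qed.
Let C_ge0 : 0 <= C.
Proof. exact: expR_ge0. Qed.

Definition integrand (h : Sigma S -> R) (x : Sigma S) (z : S) : R :=
  h (sappend x z) * expR (phi (sappend x z)).
Definition K h x : \bar R := \int[mu]_z (integrand h x z)%:E.
Definition Kr h x : R := fine (K h x).

Let Econt x : continuous (fun z => expR (phi (sappend x z))).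
Proof.
move=> z.
have h1 := @sappend_contx R S x z.
have h2 := (proj1 phi_Cb (sappend x z)).
have h3 := @continuous_expR R (phi (sappend x z)).
have := @continuous_comp _ _ _ phi expR _ h2 h3.
move=> h4.
have := @continuous_comp _ _ _ (sappend x) (expR \o phi) z h1 h4.
exact.
Qed.

Lemma meas_integrand h x : measurable_fun setT (h : X -> R) ->
  measurable_fun setT (integrand h x : borel S -> R).
Proof.
move=> mh; apply: measurable_funM.
  have m1 := @cont_meas_borel _ _ _ (@sappend_contx R S x).
  have m2 := measurableT_comp mh m1.
  exact: m2.
exact: (@cont_meas_R R _ _ (Econt x)).
Qed.

Lemma integrand_bd h x B : (forall y, `|h y| <= B) ->
  forall z, `|integrand h x z| <= B * C.
Proof.
move=> hB z; rewrite /integrand normrM (gtr0_norm (E_gt0 _)).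
by apply: ler_pM => //; exact: (le_trans (normr_ge0 _) (hB (sappend x z))).
Qed.

Lemma K_fin h B x : measurable_fun setT (h : X -> R) -> (forall y, `|h y| <= B) ->
  K h x \is a fin_num.
Proof.
move=> mh hB; apply: (@int_bdd_fin _ _ _ mu _ (B * C)).
  exact: meas_integrand.
exact: integrand_bd.
Qed.

Lemma KE h B x : measurable_fun setT (h : X -> R) -> (forall y, `|h y| <= B) ->
  K h x = (Kr h x)%:E.
Proof. by move=> mh hB; rewrite /Kr fineK //; exact: (@K_fin h B x mh hB). Qed.

Lemma Kr_bd h B x : measurable_fun setT (h : X -> R) -> (forall y, `|h y| <= B) ->
  `|Kr h x| <= B * C.
Proof.
move=> mh hB; rewrite -lee_fin -abse_EFin -(@KE h B x mh hB).
apply: (le_trans (le_abse_integral _ _ _)) => //.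
  by apply/measurable_EFinP; exact: meas_integrand.
apply: (@le_trans _ _ (\int[mu]_z (B * C)%:E)%E).
  apply: ge0_le_integral => //.
  - by apply: measurableT_comp => //; apply/measurable_EFinP; exact: meas_integrand.
  - by move=> z _; rewrite abse_EFin lee_fin (@integrand_bd h x B hB z).
have -> : (\int[mu]_z (B * C)%:E = (B * C)%:E * mu setT)%E.
  exact: (@integral_cst _ _ _ mu setT measurableT (B * C)%:E).
by rewrite probability_setT mule1.
Qed.

Lemma K_ge0 h x : (forall y, 0 <= h y) -> (0 <= K h x)%E.
Proof.
move=> h0; apply: integral_ge0 => z _; rewrite lee_fin /integrand.
by apply: mulr_ge0 => //; exact: expR_ge0.
Qed.


Lemma Kr_cont h : Cb h -> continuous (Kr h : Sigma S -> R).
Proof.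
move=> [hc [B hB]].
have mh : measurable_fun setT (h : X -> R) := @cont_meas_R R _ _ hc.
move=> x0 V HV; apply: contrapT => nV.
have [u [ux nu]] := @not_nbhs_seq R S x0 (Kr h @^-1` V) nV.
have pc z : integrand h (u n) z @[n --> \oo] --> integrand h x0 z.
  have sc : sappend (u n) z @[n --> \oo] --> sappend x0 z.
    exact: (cvg_comp _ _ ux (@sappend_contz R S z x0)).
  apply: cvgM.
    exact: (cvg_comp _ _ sc (hc _)).
  exact: (cvg_comp _ _ sc (continuous_comp (proj1 phi_Cb _) (@continuous_expR R _))).
have cK : K h (u n) @[n --> \oo] --> K h x0.
  apply: (@dcvg_cst _ _ _ mu _ _ (B * C)).
  - move=> n; apply/measurable_EFinP; exact: meas_integrand.
  - move=> z; apply: cvg_EFin; first exact: nearW.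
    exact: pc.
  - by move=> n z; rewrite abse_EFin lee_fin (@integrand_bd h _ B hB z).
have : Kr h (u n) @[n --> \oo] --> Kr h x0.
  apply: fine_cvg; rewrite -(@KE h B x0 mh hB); exact: cK.
move=> /(_ V HV) [N _ HN]; exact: (nu N (HN N (leqnn N))).
Qed.

Lemma indic_bd (U : set (Sigma S)) y : `|\1_U y : R| <= 1.
Proof. by rewrite indicE; case: (y \in U); rewrite ?normr1 ?normr0. Qed.

Lemma indic_ge0' (U : set (Sigma S)) y : 0 <= (\1_U y : R).
Proof. by rewrite indicE. Qed.

Lemma indic_le1 (U : set (Sigma S)) y : (\1_U y : R) <= 1.
Proof. by rewrite indicE; case: (y \in U). Qed.

Lemma K1_meas (U : set (Sigma S)) : open U -> measurable_fun setT (Kr \1_U : X -> R).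
Proof.
move=> oU.
have mU : measurable (U : set X) := @open_meas _ U oU.
have mI : measurable_fun setT (\1_U : X -> R) by exact: measurable_indic.
apply: (measurability _ (RGenOInfty.measurableE R)) => //.
move=> _ [_ [r ->] <-]; apply: sub_sigma_algebra; rewrite setTI.
rewrite openE => x0 /= Hx0.
rewrite /= in_itv /= andbT in Hx0.
apply: contrapT => nV.
have [u [ux nu]] := @not_nbhs_seq R S x0 _ nV.
have Kle n : Kr \1_U (u n) <= r.
  have := nu n; rewrite /= in_itv /= andbT => /negP; by rewrite -leNgt.
pose g n z := integrand \1_U (u n) z * \1_U (sappend x0 z).
have mg n : measurable_fun setT (g n : borel S -> R).
  apply: measurable_funM; first exact: meas_integrand.
  exact: (measurableT_comp mI (@cont_meas_borel _ _ _ (@sappend_contx R S x0))).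
have g0 n z : 0 <= g n z.
  by apply: mulr_ge0; [apply: mulr_ge0; [exact: indic_ge0'|exact: expR_ge0]|exact: indic_ge0'].
have gle n z : g n z <= integrand \1_U (u n) z.
  apply: ler_piMr; last exact: indic_le1.
  by apply: mulr_ge0; [exact: indic_ge0'|exact: expR_ge0].
have gbd n z : `|g n z| <= C.
  rewrite /g normrM -[C]mulr1; apply: ler_pM => //.
    by rewrite -[C]mul1r; apply: integrand_bd; exact: indic_bd.
  exact: indic_bd.
have gconv z : g n z @[n --> \oo] --> integrand \1_U x0 z.
  have sc : sappend (u n) z @[n --> \oo] --> sappend x0 z.
    exact: (cvg_comp _ _ ux (@sappend_contz R S z x0)).
  case: (boolP (sappend x0 z \in U)) => Hz.
  - have nU : nbhs (sappend x0 z) U.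
      by apply: open_nbhs_nbhs; split => //; exact: set_mem.
    have ev := sc U nU.
    have ee : {near \oo, (fun n => expR (phi (sappend (u n) z))) =1 (fun n => g n z)}.
      apply: (@filterS _ \oo _ _ _ _ ev) => n /= Un.
      by rewrite /g /integrand !indicE (mem_set Un) Hz !mul1r mulr1.
    apply: (cvg_trans (near_eq_cvg ee)).
    rewrite /integrand indicE Hz mul1r.
    exact: (cvg_comp _ _ sc (continuous_comp (proj1 phi_Cb _) (@continuous_expR R _))).
  - have -> : (fun n => g n z) = fun=> 0.
      by apply/funext => n; rewrite /g indicE (negbTE Hz) mulr0.
    by rewrite /integrand indicE (negbTE Hz) mul0r; exact: cvg_cst.
have cI : (\int[mu]_z (g n z)%:E)%E @[n --> \oo] --> K \1_U x0.
  apply: (@dcvg_cst _ _ _ mu _ _ C).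
  - by move=> n; apply/measurable_EFinP; exact: mg.
  - by move=> z; apply: cvg_EFin; [exact: nearW|exact: gconv].
  - by move=> n z; rewrite abse_EFin lee_fin.
have le_n n : (\int[mu]_z (g n z)%:E <= r%:E)%E.
  apply: (@le_trans _ _ (K \1_U (u n))).
    apply: ge0_le_integral => //.
    all: try (by move=> z _; rewrite lee_fin).
    all: try (by apply/measurable_EFinP; exact: mg).
    all: try (by apply/measurable_EFinP; exact: meas_integrand).
    all: try (by move=> z _; rewrite lee_fin /integrand; apply: mulr_ge0; [exact: indic_ge0'|exact: expR_ge0]).
  by rewrite (@KE _ 1 _ mI (@indic_bd U)) lee_fin.
have : (K \1_U x0 <= r%:E)%E.
  rewrite -(cvg_lim _ cI)//; apply: lime_le.
    by apply/cvg_ex; eexists; exact: cI.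
  exact: nearW.
rewrite (@KE _ 1 _ mI (@indic_bd U)) lee_fin => H.
by move: Hx0; rewrite ltNge H.
Qed.

Definition Int (a : {measure set X -> \bar R}) (g : Sigma S -> R) : \bar R :=
  \int[a]_x (g x)%:E.

Lemma efin_eq4 (a b c d : \bar R) : a \is a fin_num -> b \is a fin_num ->
  c \is a fin_num -> d \is a fin_num ->
  (a + (-1)%:E * b = c - d -> a + d = b + c)%E.
Proof.
case: a => // a _; case: b => // b _; case: c => // c _; case: d => // d _.
move=> /= -[] H; congr EFin; lra.
Qed.

Lemma step0 (lam nu : {charge set X -> \bar R}) :
  (forall A, measurable A -> lam A = Lstar mu phi nu A) ->
  forall U, open U ->
  (cpos lam U + Int (cneg nu) (Kr \1_U) = cneg lam U + Int (cpos nu) (Kr \1_U))%E.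
Proof.
move=> H U oU.
have mU : measurable (U : set X) := @open_meas _ U oU.
have mI : measurable_fun setT (\1_U : X -> R) by exact: measurable_indic.
have H' : lam U = cint nu (fun x => K \1_U x) := H U mU.
have eK : (fun x : X => K \1_U x) = (fun x => (Kr \1_U x)%:E).
  by apply/funext => x; exact: (@KE _ 1 x mI (@indic_bd U)).
rewrite eK /cint (jordan_decomp (svalP (hahnN lam)) mU) /cadd /cscale /= in H'.
have mK := @K1_meas U oU.
have bK x : `|Kr \1_U x| <= 1 * C := @Kr_bd _ 1 x mI (@indic_bd U).
apply: efin_eq4 H'.
- exact: fin_num_measure.
- exact: fin_num_measure.
- exact: (@int_bdd_fin _ _ _ (cpos nu) _ (1 * C) mK bK).
- exact: (@int_bdd_fin _ _ _ (cneg nu) _ (1 * C) mK bK).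
Qed.

Lemma int_sum_scale d' (T : measurableType d') (a : {measure set T -> \bar R})
  N (f : nat -> T -> R) (c : R) : 0 <= c ->
  (forall k, measurable_fun setT (f k)) -> (forall k x, 0 <= f k x) ->
  (\int[a]_x (\sum_(k < N) c * f k x)%:E =
   \sum_(k < N) c%:E * \int[a]_x (f k x)%:E)%E.
Proof.
move=> c0 mf f0.
under eq_integral do rewrite -sumEFin.
rewrite ge0_integral_sum //.
- apply: eq_bigr => k _.
  under eq_integral do rewrite EFinM.
  by rewrite ge0_integralZl_EFin // => [x _|]; [rewrite lee_fin|apply/measurable_EFinP].
- move=> k; apply/measurable_EFinP; apply: measurable_funM => //.
- by move=> k x _; rewrite lee_fin mulr_ge0.
Qed.

Lemma cvg_bd_inv (a : nat -> R) (l : R) :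
  (forall n, `|a n - l| <= n.+1%:R^-1) -> a n @[n --> \oo] --> l.
Proof.
move=> H; apply/cvgrPdist_le => e e0; near=> n.
rewrite distrC (le_trans (H n))//.
near: n; exists (Num.truncn e^-1) => // n /= Hn.
rewrite -[leRHS]invrK lef_pV2 ?posrE ?invr_gt0 ?ltr0n //.
rewrite truncn_le_nat in Hn; apply: ltW; apply: (lt_le_trans Hn).
by rewrite ler_nat.
Unshelve. all: by end_near.
Qed.

Lemma Kr_ge0 h x : measurable_fun setT (h : X -> R) -> (forall y, `|h y| <= 1) ->
  (forall y, 0 <= h y) -> 0 <= Kr h x.
Proof.
move=> mh hb h0; rewrite -lee_fin -(@KE h 1 x mh hb); exact: K_ge0.
Qed.

Section Step1.
Variables (lam nu : {charge set X -> \bar R}).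
Hypothesis Hl : forall A, measurable A -> lam A = Lstar mu phi nu A.
Variable h : Sigma S -> R.
Hypothesis hCb : Cb h.
Hypothesis h0 : forall y, 0 <= h y.

Let hc : continuous (h : Sigma S -> R) := proj1 hCb.
Let mh : measurable_fun setT (h : X -> R) := @cont_meas_R R _ _ hc.
Let B0 : R := sval (cid (proj2 hCb)).
Let B0P y : `|h y| <= B0 := svalP (cid (proj2 hCb)) y.
Let Bn : nat := (Num.truncn B0).+1.
Let hB y : h y <= Bn%:R.
Proof.
apply: (le_trans (ler_norm _)); apply: (le_trans (B0P y)).
exact: ltW (truncnS_gt _).
Qed.
Let habs y : `|h y| <= Bn%:R.
Proof. by rewrite ger0_norm. Qed.

Let c n : R := n.+1%:R^-1.
Let c0 n : 0 <= c n.
Proof. by rewrite /c invr_ge0. Qed.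
Let U n (k : nat) := [set y : Sigma S | (k.+1%:R < h y * n.+1%:R)%R].
Let oU n k : open (U n k).
Proof.
change (open ((fun y => h y * n.+1%:R) @^-1` [set x : R | k.+1%:R < x])).
apply: open_comp => [y _|]; last exact: open_gt.
by apply: cvgM; [exact: hc|exact: cvg_cst].
Qed.
Let mU n k : measurable (U n k : set X) := @open_meas _ _ (oU n k).
Let mIU n k : measurable_fun setT (\1_(U n k) : X -> R).
Proof. exact: measurable_indic. Qed.

Let s n y := \sum_(k < n.+1 * Bn) c n * \1_(U n k) y.

Let ms n : measurable_fun setT (s n : X -> R).
Proof.
apply: measurable_sum => k; apply: measurable_funM => //.
Qed.

Let s_bd n y : [/\ 0 <= s n y, s n y <= h y & h y - c n <= s n y].
Proof.
have -> : s n y = c n * \sum_(k < n.+1 * Bn) ((k.+1%:R < h y * n.+1%:R)%R)%:R.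
  rewrite mulr_sumr; apply: eq_bigr => k _; by rewrite indic_boolE.
have v0 : 0 <= h y * n.+1%:R by rewrite mulr_ge0.
have [H1 H2] := @count_bd R (h y * n.+1%:R) (n.+1 * Bn) v0.
set t := \sum_(k < _) _ in H1 H2 *.
have t0 : 0 <= t by apply: sumr_ge0 => k _.
have cn : c n * n.+1%:R = 1 by rewrite /c mulVf.
have vB : h y * n.+1%:R <= (n.+1 * Bn)%:R.
  by rewrite natrM mulrC ler_wpM2l.
split.
- by rewrite mulr_ge0.
- have := ler_wpM2l (c0 n) H1; rewrite mulrA [c n * h y]mulrC -mulrA cn mulr1.
  done.
- have := ler_wpM2l (c0 n) (H2 vB); rewrite mulrBr mulr1 mulrA [c n * h y]mulrC -mulrA cn mulr1.
  done.
Qed.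

Let s_abs n y : `|s n y| <= Bn%:R.
Proof.
have [H1 H2 _] := s_bd n y; rewrite ger0_norm //; exact: le_trans H2 (hB y).
Qed.

Let s_cvg y : s n y @[n --> \oo] --> h y.
Proof.
apply: cvg_bd_inv => n; have [H1 H2 H3] := s_bd n y.
rewrite ler0_norm ?subr_le0 // opprB lerBlDr.
by rewrite -lerBlDl.
Qed.

Let ind_bd n k y : `|\1_(U n k) y : R| <= 1 := @indic_bd _ y.

Let Kr_s n x : Kr (s n) x = \sum_(k < n.+1 * Bn) c n * Kr \1_(U n k) x.
Proof.
have : K (s n) x = (\sum_(k < n.+1 * Bn) c n * Kr \1_(U n k) x)%:E.
  rewrite /K.
  rewrite (eq_integral (fun z : borel S => (\sum_(k < n.+1 * Bn) c n * integrand \1_(U n k) x z)%:E)); last first.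
    move=> z _; congr EFin.
    by rewrite /integrand /s mulr_suml; apply: eq_bigr => k _; rewrite mulrA.
  rewrite (@int_sum_scale _ (borel S) mu (n.+1 * Bn) (fun k z => integrand \1_(U n k) x z) (c n)) //.
  - rewrite -sumEFin; apply: eq_bigr => k _.
    by rewrite EFinM -(@KE _ 1 x (mIU n k) (ind_bd n k)).
  - by move=> k; exact: meas_integrand.
  - by move=> k z; rewrite /integrand mulr_ge0 // expR_ge0.
by rewrite /Kr => ->.
Qed.

Let mKs n : measurable_fun setT (Kr (s n) : X -> R).
Proof.
rewrite (_ : Kr (s n) = fun x => \sum_(k < n.+1 * Bn) c n * Kr \1_(U n k) x).
  apply: measurable_sum => k; apply: measurable_funM => //.
  exact: K1_meas.
by apply/funext => x; exact: Kr_s.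
Qed.

Let Kr_s_cvg x : Kr (s n) x @[n --> \oo] --> Kr h x.
Proof.
apply: fine_cvg; rewrite -(@KE h Bn%:R x mh habs).
apply: (@dcvg_cst _ _ _ mu _ _ (Bn%:R * C)).
- by move=> n; apply/measurable_EFinP; exact: meas_integrand.
- move=> z; apply: cvg_EFin; first exact: nearW.
  by apply: cvgM; [exact: s_cvg|exact: cvg_cst].
- by move=> n z; rewrite abse_EFin lee_fin (@integrand_bd _ _ _ (s_abs n) z).
Qed.

Let Int_s (a : {measure set X -> \bar R}) n :
  Int a (s n) = (\sum_(k < n.+1 * Bn) (c n)%:E * a (U n k))%E.
Proof.
rewrite /Int /s (@int_sum_scale _ X a (n.+1 * Bn) (fun k y => \1_(U n k) y) (c n)) //.
apply: eq_bigr => k _; rewrite integral_indic // setIT //.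
Qed.

Let Kr1_ge0 n k x : 0 <= Kr \1_(U n k) x.
Proof. by apply: Kr_ge0 => // y; rewrite indicE. Qed.

Let Int_Ks (a : {measure set X -> \bar R}) n :
  Int a (Kr (s n)) = (\sum_(k < n.+1 * Bn) (c n)%:E * Int a (Kr \1_(U n k)))%E.
Proof.
rewrite /Int; under eq_integral => x _ do rewrite Kr_s.
rewrite (@int_sum_scale _ X a (n.+1 * Bn) (fun k x => Kr \1_(U n k) x) (c n)) //.
by move=> k; exact: K1_meas.
Qed.

Let cvg_Is (a : {finite_measure set X -> \bar R}) :
  Int a (s n) @[n --> \oo] --> Int a h.
Proof.
apply: (@dcvg_cst _ _ _ a _ _ Bn%:R).
- by move=> n; apply/measurable_EFinP.
- by move=> y; apply: cvg_EFin; [exact: nearW|exact: s_cvg].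
- by move=> n y; rewrite abse_EFin lee_fin.
Qed.

Let cvg_IKs (a : {finite_measure set X -> \bar R}) :
  Int a (Kr (s n)) @[n --> \oo] --> Int a (Kr h).
Proof.
apply: (@dcvg_cst _ _ _ a _ _ (Bn%:R * C)).
- by move=> n; apply/measurable_EFinP.
- by move=> y; apply: cvg_EFin; [exact: nearW|exact: Kr_s_cvg].
- by move=> n y; rewrite abse_EFin lee_fin (@Kr_bd _ _ _ (ms n) (s_abs n)).
Qed.

Let mKh : measurable_fun setT (Kr h : X -> R) := @cont_meas_R R _ _ (@Kr_cont h hCb).

Let fin_IKh (a : {finite_measure set X -> \bar R}) : Int a (Kr h) \is a fin_num.
Proof. exact: (@int_bdd_fin _ _ _ a _ (Bn%:R * C) mKh (fun x => @Kr_bd _ _ x mh habs)). Qed.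

Lemma step1 : (Int (cpos lam) h + Int (cneg nu) (Kr h) =
               Int (cneg lam) h + Int (cpos nu) (Kr h))%E.
Proof.
have eqn n : (Int (cpos lam) (s n) + Int (cneg nu) (Kr (s n)) =
              Int (cneg lam) (s n) + Int (cpos nu) (Kr (s n)))%E.
  rewrite !Int_s !Int_Ks -!big_split /=; apply: eq_bigr => k _.
  have I0 a : (0 <= Int a (Kr \1_(U n k)))%E.
    by apply: integral_ge0 => x _; rewrite lee_fin.
  rewrite -!ge0_muleDr //; congr (_ * _)%E; exact: (@step0 lam nu Hl (U n k) (oU n k)).
have cL : (Int (cpos lam) (s n) + Int (cneg nu) (Kr (s n)))%E @[n --> \oo] -->
          (Int (cpos lam) h + Int (cneg nu) (Kr h))%E.
  apply: cvgeD; [apply: fin_num_adde_defl; exact: fin_IKh|exact: cvg_Is|exact: cvg_IKs].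
have cR : (Int (cneg lam) (s n) + Int (cpos nu) (Kr (s n)))%E @[n --> \oo] -->
          (Int (cneg lam) h + Int (cpos nu) (Kr h))%E.
  apply: cvgeD; [apply: fin_num_adde_defl; exact: fin_IKh|exact: cvg_Is|exact: cvg_IKs].
rewrite -(@eq_cvg _ _ \oo _ _ _ eqn) in cR.
exact: (cvg_unique (@ereal_hausdorff R) cL cR).
Qed.

End Step1.

Lemma efin_eq8 (a1p a1m a2p a2m p1 m1 p2 m2 : \bar R) :
  a1p \is a fin_num -> a1m \is a fin_num -> a2p \is a fin_num -> a2m \is a fin_num ->
  p1 \is a fin_num -> m1 \is a fin_num -> p2 \is a fin_num -> m2 \is a fin_num ->
  (a1p + p2 = a2p + p1 -> a1m + m2 = a2m + m1 ->
   (a1p - a1m) - (a2p - a2m) = (p1 - m1) - (p2 - m2))%E.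
Proof.
case: a1p => // a1p _; case: a1m => // a1m _; case: a2p => // a2p _.
case: a2m => // a2m _; case: p1 => // p1 _; case: m1 => // m1 _.
case: p2 => // p2 _; case: m2 => // m2 _.
move=> /= -[] H1 -[] H2; congr EFin; lra.
Qed.

Lemma key (lam nu : {charge set X -> \bar R}) :
  (forall A, measurable A -> lam A = Lstar mu phi nu A) ->
  forall f, Cb f -> cint lam (fun x => (f x)%:E) = cint nu (fun x => (Kr f x)%:E).
Proof.
move=> Hl f [fc [B fB]].
have mf : measurable_fun setT (f : X -> R) := @cont_meas_R R _ _ fc.
pose fp y := (f y + `|f y|) / 2.
pose fm y := (`|f y| - f y) / 2.
have fle y : f y <= `|f y| := ler_norm _.
have fle' y : - f y <= `|f y| by rewrite -normrN ler_norm.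
have fpm y : fp y - fm y = f y by rewrite /fp /fm; lra.
have fp0 y : 0 <= fp y by rewrite /fp; have := fle' y; lra.
have fm0 y : 0 <= fm y by rewrite /fm; have := fle y; lra.
have fpB y : `|fp y| <= B.
  rewrite ger0_norm // /fp; have := fB y; have := fle y; lra.
have fmB y : `|fm y| <= B.
  rewrite ger0_norm // /fm; have := fB y; have := fle' y; lra.
have fpc : continuous (fp : Sigma S -> R).
  move=> y; apply: cvgM; last exact: cvg_cst.
  by apply: cvgD; [exact: fc|apply: cvg_norm; exact: fc].
have fmc : continuous (fm : Sigma S -> R).
  move=> y; apply: cvgM; last exact: cvg_cst.
  by apply: cvgB; [apply: cvg_norm; exact: fc|exact: fc].
have fpCb : Cb fp by split => //; exists B.
have fmCb : Cb fm by split => //; exists B.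
have mfp : measurable_fun setT (fp : X -> R) := @cont_meas_R R _ _ fpc.
have mfm : measurable_fun setT (fm : X -> R) := @cont_meas_R R _ _ fmc.
have mKp : measurable_fun setT (Kr fp : X -> R) := @cont_meas_R R _ _ (@Kr_cont fp fpCb).
have mKm : measurable_fun setT (Kr fm : X -> R) := @cont_meas_R R _ _ (@Kr_cont fm fmCb).
have bKp x : `|Kr fp x| <= B * C := @Kr_bd fp B x mfp fpB.
have bKm x : `|Kr fm x| <= B * C := @Kr_bd fm B x mfm fmB.
have Krpm x : Kr f x = Kr fp x - Kr fm x.
  have : K f x = (Kr fp x - Kr fm x)%:E.
    rewrite EFinB -(@KE fp B x mfp fpB) -(@KE fm B x mfm fmB) /K.
    rewrite -(@int_bddB _ _ _ mu _ _ (B * C) (B * C)).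
    - by apply: eq_integral => z _; rewrite /integrand -mulrBl fpm.
    - exact: meas_integrand.
    - exact: integrand_bd.
    - exact: meas_integrand.
    - exact: integrand_bd.
  by rewrite /Kr => ->.
have Intf (a : {finite_measure set X -> \bar R}) :
    Int a f = (Int a fp - Int a fm)%E.
  rewrite /Int -(@int_bddB _ _ _ a _ _ B B) //.
  by apply: eq_integral => x _; rewrite fpm.
have IntK (a : {finite_measure set X -> \bar R}) :
    Int a (Kr f) = (Int a (Kr fp) - Int a (Kr fm))%E.
  rewrite /Int -(@int_bddB _ _ _ a _ _ (B * C) (B * C)) //.
  by apply: eq_integral => x _; rewrite Krpm.
have fin1 (a : {finite_measure set X -> \bar R}) g B' :
    measurable_fun setT (g : X -> R) -> (forall y, `|g y| <= B') -> Int a g \is a fin_num.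
  by move=> mg gb; exact: (@int_bdd_fin _ _ _ a _ B' mg gb).
have sp := @step1 lam nu Hl fp fpCb fp0.
have sm := @step1 lam nu Hl fm fmCb fm0.
rewrite /cint.
change ((Int (cpos lam) f - Int (cneg lam) f)%E =
        (Int (cpos nu) (Kr f) - Int (cneg nu) (Kr f))%E).
rewrite !Intf !IntK.
apply: efin_eq8 sp sm; apply: fin1; eauto.
Qed.

End Main.

Local Open Scope ereal_scope.

Theorem lemma2p1 (R : realType) (S : completePseudoMetricType R)
  (S_hausdorff : hausdorff_space S) (S_separable : separable S)
  (mu : probability (borel S) R) (phi : Sigma S -> R) (phi_Cb : Cb phi)
  (nu_ : nat -> {charge set borel (Sigma S) -> \bar R})
  (nu : {charge set borel (Sigma S) -> \bar R})
  (Lnu_ : nat -> {charge set borel (Sigma S) -> \bar R})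
  (Lnu : {charge set borel (Sigma S) -> \bar R}) :
  (forall n (A : set (borel (Sigma S))), measurable A -> Lnu_ n A = Lstar mu phi (nu_ n) A) ->
  (forall A : set (borel (Sigma S)), measurable A -> Lnu A = Lstar mu phi nu A) ->
  weak_cvg nu_ nu -> weak_cvg Lnu_ Lnu.
Proof.
move=> H1 H2 Hw f fCb.
have e n := @key R S mu phi phi_Cb (Lnu_ n) (nu_ n) (H1 n) f fCb.
rewrite (@key R S mu phi phi_Cb Lnu nu H2 f fCb).
rewrite (@eq_cvg _ _ \oo _ _ _ e).
apply: Hw; split.
  exact: (@Kr_cont R S mu phi phi_Cb f fCb).
have [fc [B fB]] := fCb.
have mf : measurable_fun setT (f : borel (Sigma S) -> R) := @cont_meas_R R _ _ fc.
exists (B * expR (sval (cid (proj2 phi_Cb))))%R => x.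
exact: (@Kr_bd R S mu phi phi_Cb f B x mf fB).
Qed.
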